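(* Let $k\ge3$ and let $\Gamma=(X,E)$ be a finite set-homogeneous $k$-hypergraph. Then $\mathrm{Aut}(\Gamma)$ acts 2-transitively on $X$.
   Context: A $k$-hypergraph is a pair $(X,E)$ with $E$ a set of $k$-element subsets of $X$ (edges). It is set-homogeneous if for every $t\ge1$, whenever $U,V\subseteq X$ with $|U|=|V|=t$ carry isomorphic induced subhypergraphs there is $g\in\mathrm{Aut}(\Gamma)$ with $U^g=V$. 2-transitive means transitive on ordered pairs of distinct points. *)

(* Defs.v *)
From mathcomp Require Import all_boot all_fingroup.
Set Implicit Arguments. Unset Strict Implicit. Unset Printing Implicit Defensive.

Definition is_khypergraph (T : finType) (k : nat) (E : {set {set T}}) : Prop :=
  forall e, e \in E -> #|e| = k.

Definition is_aut (T : finType) (E : {set {set T}}) (g : {perm T}) : Prop :=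
  forall A : {set T}, (A \in E) = ((g @: A) \in E).

Definition induced_iso (T : finType) (E : {set {set T}}) (U V : {set T}) : Prop :=
  exists f : T -> T,
    [/\ {in U &, injective f}, f @: U = V &
        forall A : {set T}, A \subset U -> (A \in E) = ((f @: A) \in E)].

Definition set_homogeneous (T : finType) (E : {set {set T}}) : Prop :=
  forall (t : nat) (U V : {set T}), 1 <= t -> #|U| = t -> #|V| = t ->
    induced_iso E U V ->
    exists g : {perm T}, is_aut E g /\ g @: U = V.

Definition aut_2transitive (T : finType) (E : {set {set T}}) : Prop :=
  forall x y x' y' : T, x != y -> x' != y' ->
    exists g : {perm T}, [/\ is_aut E g, g x = x' & g y = y'].

(* Main.v *)
Require Import Defs.
From mathcomp Require Import all_boot all_fingroup.
From mathcomp Require Import zify.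
Set Implicit Arguments. Unset Strict Implicit. Unset Printing Implicit Defensive.

Section S1.
Variables (T : finType) (k : nat) (E : {set {set T}}).
Hypothesis hk : 3 <= k.
Hypothesis hE : is_khypergraph k E.
Hypothesis hsh : set_homogeneous E.

Definition autb (g : {perm T}) := [forall A : {set T}, (A \in E) == (g @: A \in E)].

Lemma autP g : reflect (is_aut E g) (autb g).
Proof. by apply: (iffP forallP) => H A; [exact/eqP | apply/eqP]. Qed.

Lemma autE g A : autb g -> (A \in E) = (g @: A \in E).
Proof. by move/autP. Qed.

Lemma imsetM (g h : {perm T}) (A : {set T}) : (g * h)%g @: A = h @: (g @: A).
Proof. by rewrite -imset_comp; apply: eq_imset => x; rewrite permM. Qed.

Lemma imsetV (g : {perm T}) (A : {set T}) : g^-1%g @: (g @: A) = A.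
Proof. by rewrite -imset_comp -[RHS]imset_id; apply: eq_imset => x /=; rewrite permK. Qed.

Lemma imsetVK (g : {perm T}) (A : {set T}) : g @: (g^-1%g @: A) = A.
Proof. by rewrite -imset_comp -[RHS]imset_id; apply: eq_imset => x /=; rewrite permKV. Qed.

Lemma autbM g h : autb g -> autb h -> autb (g * h)%g.
Proof. by move=> Hg Hh; apply/forallP => A; rewrite imsetM -(autE _ Hh) -(autE _ Hg). Qed.

Lemma autbV g : autb g -> autb g^-1%g.
Proof. by move=> Hg; apply/forallP => A; rewrite {1}(autE (g^-1%g @: A) Hg) imsetVK. Qed.

Lemma memV (g : {perm T}) (S : {set T}) v : (v \in g @: S) = (g^-1%g v \in S).
Proof. by rewrite -{1}(permKV g v) mem_imset //; apply: perm_inj. Qed.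

Lemma card_perm (g : {perm T}) (A : {set T}) : #|g @: A| = #|A|.
Proof. by apply: card_imset; apply: perm_inj. Qed.

Lemma smallE (A : {set T}) : #|A| != k -> (A \in E) = false.
Proof. by move=> H; apply/negP => /hE HA; rewrite HA eqxx in H. Qed.

Lemma apply_sh (U V : {set T}) (f : T -> T) :
  {in U &, injective f} -> f @: U = V ->
  (forall A : {set T}, A \subset U -> (A \in E) = (f @: A \in E)) -> 0 < #|U| ->
  exists g, autb g /\ g @: U = V.
Proof.
move=> Hi Hf Hiso H0.
have HV : #|V| = #|U| by rewrite -Hf card_in_imset.
have [g [/autP Hg HgU]] := hsh H0 erefl HV (ex_intro _ f (And3 Hi Hf Hiso)).
by exists g.
Qed.

Lemma small_iso (f : T -> T) (A : {set T}) : #|A| < k -> (A \in E) = (f @: A \in E).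
Proof.
move=> H; rewrite !smallE //; rewrite neq_ltn ?H //.
by rewrite (leq_ltn_trans (leq_imset_card _ _) H).
Qed.

Lemma hom1 x x' : exists g, autb g /\ g x = x'.
Proof.
have H1 : {in [set x] &, injective (fun _ : T => x')}.
  by move=> a b /set1P -> /set1P ->.
have H2 : (fun _ : T => x') @: [set x] = [set x'] by rewrite imset_set1.
have H3 : forall A : {set T}, A \subset [set x] -> (A \in E) = ((fun _ : T => x') @: A \in E).
  move=> A HA; apply: small_iso; apply: (leq_ltn_trans (subset_leq_card HA)).
  by rewrite cards1 (leq_ltn_trans _ hk).
have H4 : 0 < #|[set x]| by rewrite cards1.
have [g [Hg Hgx]] := apply_sh H1 H2 H3 H4.
by exists g; split => //; apply/set1P; rewrite -Hgx imset_set1 set11.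
Qed.

Lemma hom2 u v u' v' : u != v -> u' != v' ->
  exists g, autb g /\ g @: [set u; v] = [set u'; v'].
Proof.
move=> Huv Hu'v'.
pose f := fun z => if z == u then u' else v'.
have H1 : {in [set u; v] &, injective f}.
  rewrite /f; move=> a b /set2P [] -> /set2P [] -> //=; rewrite eqxx ?(eq_sym v u) ?(negbTE Huv) //.
  1-2: by move=> E'; move: Hu'v'; rewrite E' eqxx.
have H2 : f @: [set u; v] = [set u'; v'].
  by rewrite imsetU1 imset_set1 /f eqxx eq_sym (negbTE Huv).
have H3 : forall A : {set T}, A \subset [set u; v] -> (A \in E) = (f @: A \in E).
  move=> A HA; apply: small_iso; apply: (leq_ltn_trans (subset_leq_card HA)).
  by rewrite cards2 Huv (leq_ltn_trans _ hk).
have H4 : 0 < #|[set u; v]| by rewrite cards2 Huv.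
have [g [Hg Hgx]] := apply_sh H1 H2 H3 H4.
by exists g.
Qed.



Lemma bij (A B : {set T}) (t0 : T) : #|A| = #|B| ->
  exists f : T -> T, {in A &, injective f} /\ f @: A = B.
Proof.
move=> HAB.
pose f := fun z => nth t0 (enum B) (index z (enum A)).
have Hi : {in A &, injective f}.
  move=> z1 z2 H1 H2; rewrite /f => /eqP.
  rewrite nth_uniq ?enum_uniq // -?cardE -?HAB ?cardE ?index_mem ?mem_enum //.
  move/eqP => Hid.
  by rewrite -(nth_index t0 (s:=enum A) (x:=z1)) ?mem_enum // Hid nth_index ?mem_enum.
exists f; split => //.
apply/eqP; rewrite eqEcard card_in_imset // HAB leqnn andbT.
apply/subsetP => _ /imsetP [z Hz ->].
by rewrite /f -mem_enum mem_nth // -cardE -HAB cardE index_mem mem_enum.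
Qed.

Definition trip (a b c : T) : {set T} := a |: [set b; c].

Lemma card_trip a b c : a != b -> b != c -> a != c -> #|trip a b c| = 3.
Proof.
move=> Hab Hbc Hac; rewrite /trip cardsU1 cards2 Hbc !inE.
by rewrite (negbTE Hab) (negbTE Hac).
Qed.

Lemma card_trip_le a b c : #|trip a b c| <= 3.
Proof.
rewrite /trip cardsU1.
have h1 : (a \notin [set b; c]) <= 1 by case: (_ \notin _).
have h2 : #|[set b; c]| <= 2 by rewrite cards2; case: (_ != _).
exact: (leq_add h1 h2).
Qed.

Lemma imsetT_perm (g : {perm T}) : g @: [set: T] = [set: T].
Proof. by apply/eqP; rewrite eqEcard subsetT card_perm leqnn. Qed.

Section S2.
Variables (p q : T).
Hypothesis Hpq : p != q.
Hypothesis Hns : forall s, autb s -> s p = q -> s q = p -> False.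

Definition R u v := [exists g : {perm T}, autb g && (g p == u) && (g q == v)].

Lemma RP u v : reflect (exists g, [/\ autb g, g p = u & g q = v]) (R u v).
Proof.
apply: (iffP existsP) => [[g /andP [/andP [Hg /eqP Hu] /eqP Hv]]|[g [Hg Hu Hv]]].
  by exists g.
by exists g; rewrite Hg Hu Hv !eqxx.
Qed.

Lemma R_img h u v : autb h -> R u v -> R (h u) (h v).
Proof.
move=> Hh /RP [g [Hg Hu Hv]]; apply/RP; exists (g * h)%g.
by rewrite !permM Hu Hv autbM.
Qed.

Lemma R_aut h u v : autb h -> R (h u) (h v) = R u v.
Proof.
move=> Hh; apply/idP/idP; last exact: R_img.
by move/(R_img (autbV Hh)); rewrite !permK.
Qed.

Lemma R_irr u : R u u = false.
Proof.
apply/negbTE/negP => /RP [g [_ Hu Hv]].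
by move: Hpq; rewrite -Hv in Hu; rewrite (perm_inj Hu) eqxx.
Qed.

Lemma R_asym u v : R u v -> R v u -> False.
Proof.
move=> /RP [g [Hg Hu Hv]] /RP [h [Hh Hv' Hu']].
apply: (Hns (s := (h * g^-1)%g)); first by rewrite autbM ?autbV.
  by rewrite permM Hv' -Hv permK.
by rewrite permM Hu' -Hu permK.
Qed.

Lemma R_tot u v : u != v -> R u v || R v u.
Proof.
move=> Huv; have [g [Hg Hgs]] := hom2 Hpq Huv.
have Hp : g p \in [set u; v] by rewrite -Hgs imset_f // !inE eqxx.
have Hq : g q \in [set u; v] by rewrite -Hgs imset_f // !inE eqxx orbT.
have Hne : g p != g q by rewrite (inj_eq perm_inj).
move: Hp Hq Hne; rewrite !inE => /orP [] /eqP Hp /orP [] /eqP Hq;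
  rewrite Hp Hq ?eqxx // => _.
  by apply/orP; left; apply/RP; exists g.
by apply/orP; right; apply/RP; exists g.
Qed.

Lemma R_arc x y x' y' : R x y -> R x' y' -> exists h, [/\ autb h, h x = x' & h y = y'].
Proof.
move=> /RP [g [Hg Hx Hy]] /RP [g' [Hg' Hx' Hy']].
exists (g^-1 * g')%g; rewrite autbM ?autbV // !permM -Hx -Hy !permK.
by [].
Qed.

Definition outs (A : {set T}) u := [set v in A | R u v].
Definition ins (A : {set T}) u := [set v in A | R v u].

Lemma outs_img h A u : autb h -> h @: outs A u = outs (h @: A) (h u).
Proof.
move=> Hh; apply/setP => v; rewrite memV !inE memV.
have -> : R (h u) v = R u (h^-1%g v) by rewrite -{1}(permKV h v) R_aut.
by [].
Qed.

Lemma ins_img h A u : autb h -> h @: ins A u = ins (h @: A) (h u).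
Proof.
move=> Hh; apply/setP => v; rewrite memV !inE memV.
have -> : R v (h u) = R (h^-1%g v) u by rewrite -{1}(permKV h v) R_aut.
by [].
Qed.

Lemma imsetD1p (h : {perm T}) A u : h @: (A :\ u) = h @: A :\ h u.
Proof.
apply/setP => v; rewrite memV !inE memV.
by rewrite -(inj_eq (@perm_inj _ h)) permKV.
Qed.

Definition hasSource (A : {set T}) := [exists u in A, outs A u == A :\ u].

Lemma hasSource_img h A : autb h -> hasSource A -> hasSource (h @: A).
Proof.
move=> Hh /existsP [u /andP [Hu /eqP Hs]]; apply/existsP; exists (h u).
by rewrite imset_f //= -outs_img // Hs imsetD1p eqxx.
Qed.

Lemma noSource (A : {set T}) : (forall u, u \in A -> exists2 u', u' \in A & R u' u) -> ~~ hasSource A.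
Proof.
move=> H; apply/negP => /existsP [u /andP [Hu /eqP Hs]].
have [u' Hu' Hr] := H u Hu.
have : u' \in A :\ u.
  rewrite !inE Hu' andbT; apply/negP => /eqP Heq; by rewrite Heq R_irr in Hr.
rewrite -Hs inE => /andP [_ Hr']; exact: (R_asym Hr Hr').
Qed.

Lemma srcP (A : {set T}) x : x \in A -> (forall v, v \in A -> v != x -> R x v) -> hasSource A.
Proof.
move=> Hx H; apply/existsP; exists x; rewrite Hx /=; apply/eqP/setP => v.
rewrite !inE; have [->|Hvx] := eqVneq v x; first by rewrite R_irr andbF.
by rewrite /=; case Hv: (v \in A) => //=; apply: H.
Qed.

Lemma trip_in a b c : R a b -> R b c -> R c a ->
  forall u, u \in trip a b c -> exists2 u', u' \in trip a b c & R u' u.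
Proof.
move=> Hab Hbc Hca u; rewrite !inE => /orP [/eqP ->|/orP [] /eqP ->].
- by exists c => //; rewrite !inE eqxx !orbT.
- by exists a => //; rewrite !inE eqxx.
- by exists b => //; rewrite !inE eqxx !orbT.
Qed.

Lemma trip_card a b c : R a b -> R b c -> R c a -> #|trip a b c| = 3.
Proof.
move=> Hab Hbc Hca; apply: card_trip; apply/negP => /eqP Heq.
- by rewrite Heq R_irr in Hab.
- by rewrite Heq R_irr in Hbc.
- by rewrite Heq R_irr in Hca.
Qed.

Lemma cyc (S : {set T}) :
  (forall y y', y \in S -> y' \in S -> #|ins S y| = #|ins S y'|) ->
  1 < #|S| ->
  exists a b c, [/\ a \in S, b \in S & c \in S] /\ [/\ R a b, R b c & R c a].
Proof.
move=> Hin /card_gt1P [u [v [Hu Hv Huv]]].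
have [x [y [Hx Hy Hxy]]] : exists x y, [/\ x \in S, y \in S & R x y].
  by case/orP: (R_tot Huv) => H; [exists u, v | exists v, u].
case Hz: [exists z in S, R y z && R z x].
  move/existsP: Hz => [z /andP [Hz /andP [Hyz Hzx]]].
  by exists x, y, z.
exfalso.
have Hsub : x |: ins S x \subset ins S y.
  apply/subsetP => z; rewrite !inE => /orP [/eqP ->|/andP [HzS Hzx]].
    by rewrite Hx Hxy.
  rewrite HzS /=.
  have Hzy : z != y by apply/negP => /eqP Heq; rewrite Heq in Hzx; exact: (R_asym Hxy Hzx).
  case/orP: (R_tot Hzy) => // Hyz.
  have : [exists z0 in S, R y z0 && R z0 x] by apply/existsP; exists z; rewrite HzS Hyz Hzx.
  by rewrite Hz.
move: (subset_leq_card Hsub); rewrite cardsU1 (Hin y x Hy Hx) !inE R_irr andbF /=.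
by rewrite ltnn.
Qed.

Lemma const_lemma (S : {set T}) :
  (forall y y', y \in S -> y' \in S -> exists h, [/\ autb h, h @: S = S & h y = y']) ->
  (forall y y', y \in S -> y' \in S -> #|ins S y| = #|ins S y'|) /\
  (forall y y', y \in S -> y' \in S -> #|outs S y| = #|outs S y'|).
Proof.
move=> H; split => y y' Hy Hy'; have [h [Hh HS Hyy]] := H y y' Hy Hy'.
  by rewrite -Hyy -{2}HS -ins_img // card_perm.
by rewrite -Hyy -{2}HS -outs_img // card_perm.
Qed.

Lemma card_outs x : #|outs setT x| = \sum_y (R x y : nat).
Proof.
rewrite -sum1_card big_mkcond /=; apply: eq_bigr => y _; rewrite !inE.
by case: (R x y).
Qed.

Lemma card_ins x : #|ins setT x| = \sum_y (R y x : nat).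
Proof.
rewrite -sum1_card big_mkcond /=; apply: eq_bigr => y _; rewrite !inE.
by case: (R y x).
Qed.




Lemma key3 (A B : {set T}) : #|A| = 3 -> #|B| = 3 -> hasSource A -> ~~ hasSource B ->
  (A \in E) = (B \in E) -> False.
Proof.
move=> HA HB sA sB Heq.
have [f [Hi Hf]] := bij p (etrans HA (esym HB)).
have Hiso : forall A' : {set T}, A' \subset A -> (A' \in E) = (f @: A' \in E).
  move=> A' HA'; case: (eqVneq A' A) => [->|Hne]; first by rewrite Hf.
  apply: small_iso.
  have : #|A'| < #|A| by apply: proper_card; rewrite properEneq Hne HA'.
  by rewrite HA => H; exact: leq_trans H hk.
have H0 : 0 < #|A| by rewrite HA.
have [g [Hg HgA]] := apply_sh Hi Hf Hiso H0.
by have := hasSource_img Hg sA; rewrite HgA (negbTE sB).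
Qed.

Lemma key3' (A B : {set T}) : #|A| = 3 -> #|B| = 3 -> hasSource A -> ~~ hasSource B ->
  (A \in E) = ~~ (B \in E).
Proof.
move=> HA HB sA sB; move: (key3 HA HB sA sB).
by case: (A \in E); case: (B \in E) => //= H; exfalso; exact: H.
Qed.

Lemma small_n : #|T| <= k -> False.
Proof.
move=> hn; apply: (Hns (s := tperm p q)); last by rewrite tpermR.
  apply/forallP => A; apply/eqP; case: (eqVneq #|A| k) => [HA|HA].
    have -> : A = setT by apply/eqP; rewrite eqEcard subsetT cardsT HA hn.
    by rewrite imsetT_perm.
  by rewrite !smallE // card_perm.
by rewrite tpermL.
Qed.

Lemma vt : forall y y', y \in [set: T] -> y' \in [set: T] ->
  exists h, [/\ autb h, h @: [set: T] = [set: T] & h y = y'].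
Proof.
move=> y y' _ _; have [h [Hh Hy]] := hom1 y y'.
by exists h; rewrite imsetT_perm.
Qed.

Lemma regular : #|outs setT p| = #|ins setT p|.
Proof.
have [Hci Hco] := const_lemma vt.
have Hs : \sum_(x : T) #|outs setT x| = \sum_(x : T) #|ins setT x|.
  under eq_bigr => x _ do rewrite card_outs.
  under [RHS]eq_bigr => x _ do rewrite card_ins.
  by rewrite exchange_big.
move: Hs.
rewrite (eq_bigr (fun _ => #|outs setT p|)); last by move=> x _; apply: Hco; rewrite inE.
rewrite [RHS](eq_bigr (fun _ => #|ins setT p|)); last by move=> x _; apply: Hci; rewrite inE.
rewrite !sum_nat_const => /eqP; rewrite eqn_pmul2l; first by move/eqP.
by apply/card_gt0P; exists p.
Qed.

Lemma partition : #|T| = 1 + #|outs setT p| + #|ins setT p|.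
Proof.
have H1 : [set: T] :\ p = outs setT p :|: ins setT p.
  apply/setP => v; rewrite !inE /=; case: (eqVneq v p) => [->|Hvp] /=.
    by rewrite R_irr.
  by rewrite orbC; apply/esym; apply: R_tot.
have H2 : outs setT p :&: ins setT p = set0.
  apply/setP => v; rewrite !inE /=; apply/negbTE/negP => /andP [H H'].
  exact: (R_asym H H').
rewrite -addnA -cardsUI -H1 H2 cards0 addn0 -cardsT (cardsD1 p) inE.
by [].
Qed.

Lemma out_trans y y' : y \in outs setT p -> y' \in outs setT p ->
  exists h, [/\ autb h, h @: outs setT p = outs setT p & h y = y'].
Proof.
rewrite !inE /= => Hy Hy'; have [h [Hh Hhp Hhy]] := R_arc Hy Hy'.
by exists h; split => //; rewrite outs_img // imsetT_perm Hhp.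
Qed.

Lemma in_trans y y' : y \in ins setT p -> y' \in ins setT p ->
  exists h, [/\ autb h, h @: ins setT p = ins setT p & h y = y'].
Proof.
rewrite !inE /= => Hy Hy'; have [h [Hh Hhy Hhp]] := R_arc Hy Hy'.
by exists h; split => //; rewrite ins_img // imsetT_perm Hhp.
Qed.

Lemma final : k < #|T| -> False.
Proof.
move=> hn.
have Hreg := regular; have Hpart := partition.
have Hd : 1 < #|outs setT p| by lia.
have Hd' : 1 < #|ins setT p| by lia.
have [y0 [z0 [HyA HzA Hyz]]] := card_gt1P Hd.
rewrite !inE /= in HyA HzA.
have HA0 : #|trip p y0 z0| = 3.
  apply: card_trip => //; apply/negP => /eqP Heq.
    by rewrite Heq R_irr in HyA.
  by rewrite Heq R_irr in HzA.
have sA0 : hasSource (trip p y0 z0).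
  apply: (srcP (x:=p)); first by rewrite !inE eqxx.
  by move=> v; rewrite !inE => /orP [/eqP ->|/orP [] /eqP ->] Hv; rewrite ?eqxx // in Hv.
have [Hci _] := const_lemma vt.
have Hn1 : 1 < #|[set: T]| by rewrite cardsT; lia.
have [a [b [c [_ [Hab Hbc Hca]]]]] := cyc Hci Hn1.
have HB0 := trip_card Hab Hbc Hca.
have sB0 : ~~ hasSource (trip a b c) by apply: noSource; apply: trip_in.
case: (eqVneq k 3) => [Hk3|Hk3]; last first.
  apply: (key3 HA0 HB0 sA0 sB0).
  by rewrite !smallE // ?HA0 ?HB0 eq_sym.
have same_type : forall A B : {set T}, #|A| = 3 -> #|B| = 3 -> hasSource A = hasSource B ->
    (A \in E) = (B \in E).
  move=> A B HA HB Hs; case sA: (hasSource A).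
    have sB : hasSource B by rewrite -Hs.
    by rewrite (key3' HA HB0 sA sB0) (key3' HB HB0 sB sB0).
  have sB : ~~ hasSource B by rewrite -Hs sA.
  have sA' : ~~ hasSource A by rewrite sA.
  have H1 := key3' HA0 HA sA0 sA'; have H2 := key3' HA0 HB sA0 sB.
  by apply: negb_inj; rewrite -H1 -H2.
have [HciS _] := const_lemma out_trans.
have [a1 [b1 [c1 [[Ha1 Hb1 Hc1] [Hab1 Hbc1 Hca1]]]]] := cyc HciS Hd.
have [HciS' _] := const_lemma in_trans.
have [a2 [b2 [c2 [[Ha2 Hb2 Hc2] [Hab2 Hbc2 Hca2]]]]] := cyc HciS' Hd'.
rewrite !inE /= in Ha1 Hb1 Hc1 Ha2 Hb2 Hc2.
have HC : forall v, v \in (trip a1 b1 c1) -> R p v.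
  by move=> v; rewrite !inE => /orP [/eqP ->|/orP [] /eqP ->].
have HC' : forall v, v \in (trip a2 b2 c2) -> R v p.
  by move=> v; rewrite !inE => /orP [/eqP ->|/orP [] /eqP ->].
have pnC : p \notin (trip a1 b1 c1) by apply/negP => /HC; rewrite R_irr.
have pnC' : p \notin (trip a2 b2 c2) by apply/negP => /HC'; rewrite R_irr.
have HcC := trip_card Hab1 Hbc1 Hca1.
have HcC' := trip_card Hab2 Hbc2 Hca2.
have sC : ~~ hasSource (trip a1 b1 c1) by apply: noSource; apply: trip_in.
have sC' : ~~ hasSource (trip a2 b2 c2) by apply: noSource; apply: trip_in.
have [h0 [Hi0 Hf0]] := bij p (etrans HcC (esym HcC')).
have h0C : forall z, z \in (trip a1 b1 c1) -> h0 z \in (trip a2 b2 c2) by move=> z Hz; rewrite -Hf0 imset_f.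
have memU : forall z, z \in (p |: trip a1 b1 c1) -> z != p -> z \in (trip a1 b1 c1).
  by move=> z; rewrite !inE => /orP [->//|Hz _].
have memV' : forall z, z \in (p |: trip a2 b2 c2) -> z != p -> z \in (trip a2 b2 c2).
  by move=> z; rewrite !inE => /orP [->//|Hz _].
pose f := fun z => if z == p then p else h0 z.
have fC : forall z, z \in (trip a1 b1 c1) -> f z = h0 z.
  move=> z Hz; rewrite /f; case: (eqVneq z p) => // Hzp.
  by rewrite Hzp in Hz; rewrite Hz in pnC.
have Hi : {in (p |: trip a1 b1 c1) &, injective f}.
  move=> z1 z2 H1 H2; rewrite /f.
  case: (eqVneq z1 p) => [->|H1p]; case: (eqVneq z2 p) => [->|H2p] //.
  - move=> Heq; have := h0C z2 (memU z2 H2 H2p); rewrite -Heq.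
    by rewrite (negbTE pnC').
  - move=> Heq; have := h0C z1 (memU z1 H1 H1p); rewrite Heq.
    by rewrite (negbTE pnC').
  - by apply: Hi0; apply: memU.
have Hf : f @: (p |: trip a1 b1 c1) = (p |: trip a2 b2 c2).
  rewrite imsetU1 {1}/f eqxx -Hf0; congr (_ |: _).
  by apply: eq_in_imset; apply: fC.
have srcU : forall A : {set T}, A \subset (p |: trip a1 b1 c1) -> #|A| = 3 -> hasSource A = (p \in A).
  move=> A HAU HA; case HpA: (p \in A).
    apply: (srcP (x:=p)) => // v Hv Hvp.
    by apply: HC; apply: memU => //; apply: (subsetP HAU).
  have HAC : A \subset (trip a1 b1 c1).
    apply/subsetP => v Hv; apply: memU; first exact: (subsetP HAU).
    by apply/negP => /eqP Heq; rewrite -Heq Hv in HpA.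
  have -> : A = (trip a1 b1 c1) by apply/eqP; rewrite eqEcard HAC HcC HA leqnn.
  exact: negbTE.
have srcV : forall A : {set T}, A \subset (p |: trip a2 b2 c2) -> #|A| = 3 -> hasSource A = (p \in A).
  move=> A HAV HA; case HpA: (p \in A); last first.
    have HAC : A \subset (trip a2 b2 c2).
      apply/subsetP => v Hv; apply: memV'; first exact: (subsetP HAV).
      by apply/negP => /eqP Heq; rewrite -Heq Hv in HpA.
    have -> : A = (trip a2 b2 c2) by apply/eqP; rewrite eqEcard HAC HcC' HA leqnn.
    exact: negbTE.
  have H2 : #|A :\ p| == 2 by move: HA; rewrite (cardsD1 p) HpA add1n => -[->].
  have [u [v [Huv HAp]]] := cards2P _ H2.
  have Hu : u \in A :\ p by rewrite HAp !inE eqxx.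
  have Hv : v \in A :\ p by rewrite HAp !inE eqxx orbT.
  rewrite !inE in Hu Hv; case/andP: Hu => Hup HuA; case/andP: Hv => Hvp HvA.
  have Rup : R u p by apply: HC'; apply: memV' => //; apply: (subsetP HAV).
  have Rvp : R v p by apply: HC'; apply: memV' => //; apply: (subsetP HAV).
  have HAe : forall w, w \in A -> [|| w == p, w == u | w == v].
    by move=> w Hw; case: (eqVneq w p) => //= Hwp; rewrite -in_set2 -HAp !inE Hwp.
  case/orP: (R_tot Huv) => Hr.
    apply: (srcP (x:=u)) => // w Hw Hwu.
    by case/or3P: (HAe w Hw) => /eqP Hw'; subst w; rewrite ?eqxx /= in Hwu.
  apply: (srcP (x:=v)) => // w Hw Hwv.
  by case/or3P: (HAe w Hw) => /eqP Hw'; subst w; rewrite ?eqxx /= in Hwv.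
have pf : forall A : {set T}, A \subset (p |: trip a1 b1 c1) -> (p \in f @: A) = (p \in A).
  move=> A HAU; apply/imsetP/idP => [[z Hz Hpz]|HpA]; last by exists p; rewrite /f ?eqxx.
  case: (eqVneq z p) => [<- //|Hzp].
  have HzC := memU z (subsetP HAU z Hz) Hzp.
  by move: (h0C z HzC); rewrite -(fC z HzC) -Hpz (negbTE pnC').
have Hiso : forall A : {set T}, A \subset (p |: trip a1 b1 c1) -> (A \in E) = (f @: A \in E).
  move=> A HAU.
  have HfA : #|f @: A| = #|A|.
    by apply: card_in_imset => z1 z2 H1 H2; apply: Hi; apply: (subsetP HAU).
  have HfAV : f @: A \subset (p |: trip a2 b2 c2) by rewrite -Hf; apply: imsetS.
  case: (eqVneq #|A| 3) => [H3|Hn3].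
    apply: same_type => //; first by rewrite HfA.
    by rewrite (srcU A HAU H3) (srcV _ HfAV) ?HfA // pf.
  by rewrite !smallE // ?HfA Hk3.
have H0 : 0 < #|(p |: trip a1 b1 c1)| by apply/card_gt0P; exists p; rewrite !inE eqxx.
have [g [Hg HgU]] := apply_sh Hi Hf Hiso H0.
have sU : hasSource (p |: trip a1 b1 c1).
  apply: (srcP (x:=p)); first by rewrite !inE eqxx.
  by move=> v Hv Hvp; apply: HC; apply: memU.
have sV : ~~ hasSource (p |: trip a2 b2 c2).
  apply: noSource => u Hu; case: (eqVneq u p) => [->|Hup].
    by exists a2; [rewrite !inE eqxx orbT | apply: HC'; rewrite !inE eqxx].
  have [u' Hu' Hr] := trip_in Hab2 Hbc2 Hca2 (memV' u Hu Hup).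
  by exists u' => //; rewrite inE Hu' orbT.
by move: (hasSource_img Hg sU); rewrite HgU (negbTE sV).
Qed.

Lemma contra : False.
Proof. by case: (leqP #|T| k) => hn; [exact: small_n | exact: final]. Qed.

End S2.
End S1.

Theorem lemma5p1 (k : nat) (T : finType) (E : {set {set T}}) :
  3 <= k -> is_khypergraph k E -> set_homogeneous E -> aut_2transitive E.
Proof.
move=> hk hE hsh x y x' y' Hxy Hx'y'.
have [g [Hg Hgs]] := hom2 hk hE hsh Hxy Hx'y'.
have Hx : g x \in [set x'; y'] by rewrite -Hgs imset_f // !inE eqxx.
have Hy : g y \in [set x'; y'] by rewrite -Hgs imset_f // !inE eqxx orbT.
have Hne : g x != g y by rewrite (inj_eq perm_inj).
move: Hx Hy Hne; rewrite !inE => /orP [] /eqP Hx /orP [] /eqP Hy;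
  rewrite Hx Hy ?eqxx // => _.
  by exists g; split => //; apply/autP.
case Hs: [exists s : {perm T}, autb E s && (s x' == y') && (s y' == x')].
  move/existsP: Hs => [s /andP [/andP [Hsa /eqP Hs1] /eqP Hs2]].
  exists (g * s)%g; split; first by apply/autP; apply: autbM.
    by rewrite permM Hx Hs2.
  by rewrite permM Hy Hs1.
exfalso; apply: (contra hk hE hsh Hx'y') => s Hsa Hs1 Hs2.
have : [exists s : {perm T}, autb E s && (s x' == y') && (s y' == x')].
  by apply/existsP; exists s; rewrite Hsa Hs1 Hs2 !eqxx.
by rewrite Hs.
Qed.
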